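(* Let $k\ge0$, let $s$ be the singular factor of length $q_k$ of slope $\alpha$, let $w\in\mathcal{L}_\alpha$ be a complete first return to $s$ in the same phase, and write $s^{-1}ws^{-1}=u_0u_1\cdots u_{n-1}$ with $|u_0|=\cdots=|u_{n-1}|=q_k$. Put $\lambda=q_{k+1}-p_{k+1}-1$ if $k$ is odd and $\lambda=p_{k+1}-1$ if $k$ is even. Then the words $u_0,u_1,\ldots,u_{\lambda-1}$ end with the same letter as $s$, and the words $u_{n-\lambda},u_{n-\lambda+1},\ldots,u_{n-1}$ begin with the same letter as $s$. Moreover, $s$ begins and ends with the same letter.
   Context: $\alpha\in(0,1)$ irrational, $\alpha=[0;a_1,a_2,\ldots]$ with positive integers $a_i$, $a_1\ge2$; $p_{-1}=1,q_{-1}=0,p_0=0,q_0=1,p_1=1,q_1=a_1$, $p_k=a_kp_{k-1}+p_{k-2}$, $q_k=a_kq_{k-1}+q_{k-2}$ ($k\ge2$). Identify the circle $\mathbb{T}$ with $[0,1)$, $R(\rho)=\{\rho+\alpha\}$; fix one convention, $I_0=[0,1-\alpha)$, $I_1=[1-\alpha,1)$ or $I_0=(0,1-\alpha]$, $I_1=(1-\alpha,1]$. $\mathbf{s}_{\rho,\alpha}$ has $n$-th letter $0$ if $R^n(\rho)\in I_0$ and $1$ otherwise; all such words share the set $\mathcal{L}_\alpha$ of finite factors. For $v=b_0\cdots b_{n-1}\in\mathcal{L}_\alpha$, $[v]=\bigcap_{i}R^{-i}(I_{b_i})$ ($\mathbf{s}_{\rho,\alpha}$ begins with $v$ iff $\rho\in[v]$).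 The singular factor of length $q_k$ is the unique $s\in\mathcal{L}_\alpha$ of length $q_k$ with $[s]$ having endpoints $0$ and $\{-q_k\alpha\}$. A word $u$ is a complete first return to $v$ in the same phase if $u$ has $v$ as a prefix and a suffix, $|u|\equiv0\pmod{|v|}$, $u$ contains at least two occurrences of $v$, and every occurrence of $v$ in $u$ at a position $i\equiv0\pmod{|v|}$ (positions from $0$) has $i=0$ or $i=|u|-|v|$. $s^{-1}ws^{-1}$ denotes $w$ with its prefix $s$ and suffix $s$ removed. *)

(* Defs.v *)
From Stdlib Require Import Reals Lra Lia Arith List.
Import ListNotations.
Open Scope R_scope.

(* pq a k = ((p_k, q_k), (p_{k+1}, q_{k+1})) with p_0 = 0, q_0 = 1,
   p_1 = 1, q_1 = a 1, p_k = a_k p_{k-1} + p_{k-2}, q_k = a_k q_{k-1} + q_{k-2}. *)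
Fixpoint pq (a : nat -> nat) (k : nat) : (nat * nat) * (nat * nat) :=
  match k with
  | O => ((0%nat, 1%nat), (1%nat, a 1%nat))
  | S k' =>
      let '((p0, q0), (p1, q1)) := pq a k' in
      ((p1, q1), (a (k' + 2)%nat * p1 + p0, a (k' + 2)%nat * q1 + q0)%nat)
  end.

Definition cf_p (a : nat -> nat) (k : nat) : nat := fst (fst (pq a k)).
Definition cf_q (a : nat -> nat) (k : nat) : nat := snd (fst (pq a k)).

(* alpha = [0; a_1, a_2, ...] : the convergents p_k/q_k tend to alpha *)
Definition is_cf_expansion (alpha : R) (a : nat -> nat) : Prop :=
  (forall i, (1 <= i)%nat -> (0 < a i)%nat) /\
  Un_cv (fun k => INR (cf_p a k) / INR (cf_q a k)) alpha.

Definition irrational (x : R) : Prop :=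
  ~ exists (p : Z) (q : nat), (0 < q)%nat /\ x = IZR p / INR q.

(* circle T identified with [0,1); R(rho) = {rho + alpha} *)
Definition rot (alpha rho : R) : R := frac_part (rho + alpha).

(* convention I_0 = [0, 1 - alpha), I_1 = [1 - alpha, 1) *)
Definition in_I0 (alpha x : R) : Prop := 0 <= x < 1 - alpha.

Definition sturm (alpha rho : R) (n : nat) : nat :=
  let x := Nat.iter n (rot alpha) rho in
  if Rle_dec 0 x then (if Rlt_dec x (1 - alpha) then 0%nat else 1%nat) else 1%nat.

Definition in_circle (rho : R) : Prop := 0 <= rho < 1.

Definition in_lang (alpha : R) (v : list nat) : Prop :=
  exists rho, in_circle rho /\ exists i : nat,
    forall j, (j < length v)%nat -> sturm alpha rho (i + j) = nth j v 0%nat.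

Definition cylinder (alpha : R) (v : list nat) (rho : R) : Prop :=
  in_circle rho /\
  forall j, (j < length v)%nat -> sturm alpha rho j = nth j v 0%nat.

(* s is a singular factor of length q_k: [s] has endpoints 0 and {-q_k alpha};
   with the convention above cylinders are left-closed right-open arcs, so
   [s] = [0, {-q_k alpha}) or [s] = [{-q_k alpha}, 1). *)
Definition singular_factor (alpha : R) (a : nat -> nat) (k : nat) (s : list nat) : Prop :=
  in_lang alpha s /\ length s = cf_q a k /\
  let x := frac_part (- (INR (cf_q a k) * alpha)) in
  ((forall rho, cylinder alpha s rho <-> 0 <= rho < x) \/
   (forall rho, cylinder alpha s rho <-> x <= rho < 1)).

Definition occurs_at (v w : list nat) (i : nat) : Prop :=
  (i + length v <= length w)%nat /\ firstn (length v) (skipn i w) = v.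

Definition complete_first_return (v u : list nat) : Prop :=
  occurs_at v u 0 /\
  occurs_at v u (length u - length v) /\
  Nat.modulo (length u) (length v) = 0%nat /\
  (exists i j, i <> j /\ occurs_at v u i /\ occurs_at v u j) /\
  (forall i, occurs_at v u i -> Nat.modulo i (length v) = 0%nat ->
             i = 0%nat \/ i = (length u - length v)%nat).

(* s^{-1} w s^{-1} *)
Definition strip (s w : list nat) : list nat :=
  skipn (length s) (firstn (length w - length s) w).

Definition block (L : nat) (m : list nat) (i : nat) : list nat :=
  firstn L (skipn (i * L) m).

Definition first_letter (u : list nat) : nat := nth 0 u 0%nat.
Definition last_letter (u : list nat) : nat := nth (length u - 1) u 0%nat.

(* Main.v *)
Require Import Defs.
From Stdlib Require Import Reals Lra Lia Arith List.
Open Scope R_scope.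


Lemma cfp0 a : cf_p a 0 = 0%nat. Proof. reflexivity. Qed.
Lemma cfq0 a : cf_q a 0 = 1%nat. Proof. reflexivity. Qed.
Lemma cfp1 a : cf_p a 1 = 1%nat. Proof. reflexivity. Qed.
Lemma cfq1 a : cf_q a 1 = a 1%nat. Proof. reflexivity. Qed.

Lemma pq_fstS a k : fst (pq a (S k)) = snd (pq a k).
Proof. simpl. destruct (pq a k) as [[p0 q0] [p1 q1]]. reflexivity. Qed.

Lemma pq_sndS a k : snd (pq a (S k)) =
  (a (k+2)%nat * fst (snd (pq a k)) + fst (fst (pq a k)),
   a (k+2)%nat * snd (snd (pq a k)) + snd (fst (pq a k)))%nat.
Proof. simpl. destruct (pq a k) as [[p0 q0] [p1 q1]]. reflexivity. Qed.

Lemma cfpSS a k : cf_p a (S (S k)) = (a (k+2)%nat * cf_p a (S k) + cf_p a k)%nat.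
Proof.
  unfold cf_p. rewrite (pq_fstS a (S k)), pq_sndS, <- (pq_fstS a k). reflexivity.
Qed.
Lemma cfqSS a k : cf_q a (S (S k)) = (a (k+2)%nat * cf_q a (S k) + cf_q a k)%nat.
Proof.
  unfold cf_q. rewrite (pq_fstS a (S k)), pq_sndS, <- (pq_fstS a k). reflexivity.
Qed.

Lemma cf_nat a : (forall i, (1 <= i)%nat -> (0 < a i)%nat) -> (2 <= a 1%nat)%nat ->
  forall k, (1 <= cf_q a k)%nat /\ (cf_p a k + 1 <= cf_q a k)%nat /\ (1 <= cf_p a (S k))%nat.
Proof.
  intros Ha H1.
  assert (forall k, ((1 <= cf_q a k) /\ (cf_p a k + 1 <= cf_q a k) /\ (1 <= cf_p a (S k)))%nat /\
                    ((1 <= cf_q a (S k)) /\ (cf_p a (S k) + 1 <= cf_q a (S k)) /\ (1 <= cf_p a (S (S k))))%nat).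
  { induction k.
    - rewrite cfpSS, cfq0, cfp0, cfq1, cfp1. specialize (Ha 2%nat). simpl. nia.
    - destruct IHk as [[B1 [B2 B3]] [A1 [A2 A3]]]. split; [lia|].
      rewrite (cfqSS a k), (cfpSS a (S k)). rewrite (cfpSS a k) in *.
      pose proof (Ha (k+2)%nat). pose proof (Ha (S k + 2)%nat).
      set (x := a (k+2)%nat) in *. set (y := a (S k + 2)%nat) in *.
      set (p0 := cf_p a k) in *. set (p1 := cf_p a (S k)) in *.
      set (q0 := cf_q a k) in *. set (q1 := cf_q a (S k)) in *.
      assert (1 <= x)%nat by lia. assert (1 <= y)%nat by lia.
      split; [nia|split; nia]. }
  intro k. apply H.
Qed.

Definition P a k := INR (cf_p a k).
Definition Q a k := INR (cf_q a k).

Lemma PSS a k : P a (S (S k)) = INR (a (k+2)%nat) * P a (S k) + P a k.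
Proof. unfold P. rewrite cfpSS, plus_INR, mult_INR. reflexivity. Qed.
Lemma QSS a k : Q a (S (S k)) = INR (a (k+2)%nat) * Q a (S k) + Q a k.
Proof. unfold Q. rewrite cfqSS, plus_INR, mult_INR. reflexivity. Qed.

Lemma det a k : P a (S k) * Q a k - P a k * Q a (S k) = (-1)^k.
Proof.
  induction k.
  - unfold P, Q. rewrite cfp1, cfq0, cfp0. simpl. ring.
  - rewrite PSS, QSS. simpl pow. rewrite <- IHk. ring.
Qed.

Lemma sg_cases k : (-1)^k = 1 \/ (-1)^k = -1.
Proof. induction k; simpl; [left; ring|]. destruct IHk as [H|H]; rewrite H; [right|left]; ring. Qed.

Lemma sg_sq k : (-1)^k * (-1)^k = 1.
Proof. destruct (sg_cases k) as [H|H]; rewrite H; ring. Qed.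

Lemma sg_odd k : (-1)^k = if Nat.odd k then -1 else 1.
Proof.
  induction k. simpl; ring.
  rewrite Nat.odd_succ, <- Nat.negb_odd. simpl pow. rewrite IHk.
  destruct (Nat.odd k); simpl; ring.
Qed.

Definition d al a k := (-1)^k * (Q a k * al - P a k).

Lemma d_rel1 al a k : Q a (S k) * d al a k + Q a k * d al a (S k) = 1.
Proof.
  unfold d. replace (Q a (S k) * ((-1) ^ k * (Q a k * al - P a k)) +
   Q a k * ((-1) ^ S k * (Q a (S k) * al - P a (S k)))) with
   ((-1)^k * (P a (S k) * Q a k - P a k * Q a (S k))) by (simpl; ring).
  rewrite det. apply sg_sq.
Qed.

Lemma d_rel2 al a k : P a (S k) * d al a k + P a k * d al a (S k) = al.
Proof.
  unfold d. replace (P a (S k) * ((-1) ^ k * (Q a k * al - P a k)) +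
   P a k * ((-1) ^ S k * (Q a (S k) * al - P a (S k)))) with
   (al * ((-1)^k * (P a (S k) * Q a k - P a k * Q a (S k)))) by (simpl; ring).
  rewrite det, sg_sq. ring.
Qed.

Lemma Qpos a : (forall i, (1 <= i)%nat -> (0 < a i)%nat) -> (2 <= a 1%nat)%nat ->
  forall k, 0 < Q a k.
Proof. intros H1 H2 k. destruct (cf_nat a H1 H2 k) as [H _]. unfold Q. apply lt_0_INR. lia. Qed.

Lemma Rabs_sg k x : (-1)^k * x <= Rabs x.
Proof. destruct (sg_cases k) as [H|H]; rewrite H; unfold Rabs; destruct Rcase_abs; lra. Qed.

Lemma sg_add2 k m : (-1)^(k + 2*m) = (-1)^k.
Proof. rewrite pow_add, pow_1_even. ring. Qed.

Definition cc a k := P a k / Q a k.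

Lemma c_step (a : nat -> nat) (Ha : forall i, (1 <= i)%nat -> (0 < a i)%nat) (Ha1 : (2 <= a 1%nat)%nat) k : 0 <= (-1)^k * (cc a (S (S k)) - cc a k).
Proof.
  assert (H0 := Qpos a Ha Ha1 k). assert (H2 := Qpos a Ha Ha1 (S (S k))).
  assert (E : P a (S (S k)) * Q a k - P a k * Q a (S (S k)) = INR (a (k+2)%nat) * (-1)^k).
  { rewrite PSS, QSS, <- (det a k). ring. }
  assert (E2 : (-1)^k * (cc a (S (S k)) - cc a k) =
     (-1)^k * (P a (S (S k)) * Q a k - P a k * Q a (S (S k))) / (Q a k * Q a (S (S k)))).
  { unfold cc. field. lra. }
  rewrite E2, E.
  replace ((-1) ^ k * (INR (a (k + 2)%nat) * (-1) ^ k)) with (INR (a (k+2)%nat) * ((-1)^k * (-1)^k)) by ring.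
  rewrite sg_sq. apply Rmult_le_pos. rewrite Rmult_1_r. apply pos_INR.
  left. apply Rinv_0_lt_compat. nra.
Qed.

Lemma c_mono (a : nat -> nat) (Ha : forall i, (1 <= i)%nat -> (0 < a i)%nat) (Ha1 : (2 <= a 1%nat)%nat) k m : 0 <= (-1)^k * (cc a (k + 2*m) - cc a k).
Proof.
  induction m. replace (k + 2*0)%nat with k by lia. lra.
  replace (k + 2 * S m)%nat with (S (S (k + 2*m))) by lia.
  pose proof (c_step a Ha Ha1 (k + 2*m)). rewrite sg_add2 in H. nra.
Qed.

Lemma c_side (a : nat -> nat) (Ha : forall i, (1 <= i)%nat -> (0 < a i)%nat) (Ha1 : (2 <= a 1%nat)%nat) al : Un_cv (fun k => INR (cf_p a k) / INR (cf_q a k)) al ->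
  forall k, 0 <= (-1)^k * (al - cc a k).
Proof.
  intros Hc k. destruct (Rle_lt_dec 0 ((-1)^k * (al - cc a k))) as [H|H]; auto.
  exfalso. destruct (Hc (- ((-1)^k * (al - cc a k)))) as [N HN]. lra.
  specialize (HN (k + 2*N)%nat ltac:(lia)). unfold Rdist in HN.
  pose proof (Rabs_sg k (INR (cf_p a (k + 2 * N)) / INR (cf_q a (k + 2 * N)) - al)).
  pose proof (c_mono a Ha Ha1 k N). unfold cc, P, Q in *. nra.
Qed.

Lemma d_pos (a : nat -> nat) (Ha : forall i, (1 <= i)%nat -> (0 < a i)%nat) (Ha1 : (2 <= a 1%nat)%nat) al : is_cf_expansion al a -> irrational al -> forall k, 0 < d al a k.
Proof.
  intros [_ Hc] Hirr k. pose proof (c_side a Ha Ha1 al Hc k). pose proof (Qpos a Ha Ha1 k).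
  assert (E : d al a k = Q a k * ((-1)^k * (al - cc a k))). { unfold d, cc. field. lra. }
  destruct (Rle_lt_or_eq_dec 0 (d al a k)) as [h|h]. rewrite E. apply Rmult_le_pos; lra.
  auto. exfalso. apply Hirr. exists (Z.of_nat (cf_p a k)), (cf_q a k). split.
  destruct (cf_nat a Ha Ha1 k); lia.
  rewrite <- INR_IZR_INZ. fold (P a k). fold (Q a k).
  unfold d in h. destruct (sg_cases k) as [S|S]; rewrite S in h; field_simplify; try lra.
  apply (Rmult_eq_reg_r (Q a k)). field_simplify; lra. lra.
  apply (Rmult_eq_reg_r (Q a k)). field_simplify; lra. lra.
Qed.

Lemma frac_eq t y z c : 0 <= y < 1 -> y = t - IZR z -> IZR c <= t < IZR c + 1 -> y = t - IZR c.
Proof.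
  intros Hy E Ht. assert (H1 : IZR (z - c) < 1) by (rewrite minus_IZR; lra).
  assert (H2 : -1 < IZR (z - c)) by (rewrite minus_IZR; lra).
  apply lt_IZR in H1. apply lt_IZR in H2. assert (z = c) by lia. subst. auto.
Qed.

Lemma fp_spec t : 0 <= frac_part t < 1 /\ exists z, frac_part t = t - IZR z.
Proof. destruct (base_fp t). split. lra. exists (Int_part t). reflexivity. Qed.

Lemma fp_val t c : IZR c <= t < IZR c + 1 -> frac_part t = t - IZR c.
Proof. intros H. destruct (fp_spec t) as [B [z E]]. eapply frac_eq; eauto. Qed.

Lemma iter_spec al : forall n x, 0 <= x < 1 ->
  0 <= Nat.iter n (rot al) x < 1 /\ exists z, Nat.iter n (rot al) x = x + INR n * al - IZR z.
Proof.
  induction n; intros x Hx.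
  - simpl. split; auto. exists 0%Z. simpl. ring.
  - rewrite Nat.iter_succ. destruct (IHn x Hx) as [B [z E]].
    set (y := Nat.iter n (rot al) x) in *. unfold rot.
    destruct (fp_spec (y + al)) as [B2 [z2 E2]].
    split; auto. exists (z + z2)%Z. rewrite E2, E, S_INR, plus_IZR. ring.
Qed.

Lemma rot_cases al y : 0 < al < 1 -> 0 <= y < 1 -> rot al y = y + al \/ rot al y = y + al - 1.
Proof.
  intros Ha Hy. unfold rot. destruct (Rlt_le_dec (y + al) 1).
  - left. rewrite (fp_val _ 0). simpl; ring. simpl; lra.
  - right. rewrite (fp_val _ 1). simpl; ring. simpl; lra.
Qed.

Lemma sturm_shift al rho i j : sturm al rho (i + j) = sturm al (Nat.iter i (rot al) rho) j.
Proof. unfold sturm. rewrite Nat.add_comm, Nat.iter_add. reflexivity. Qed.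

Lemma letter0 al x j : 0 <= Nat.iter j (rot al) x < 1 - al -> sturm al x j = 0%nat.
Proof. intros H. unfold sturm. destruct Rle_dec; [destruct Rlt_dec|]; lra || auto. Qed.
Lemma letter1 al x j : 1 - al <= Nat.iter j (rot al) x -> sturm al x j = 1%nat.
Proof. intros H. unfold sturm. destruct Rle_dec; [destruct Rlt_dec|]; lra || auto. Qed.

Lemma nth_fs (w : list nat) i L t : (t < L)%nat -> nth t (firstn L (skipn i w)) 0%nat = nth (i + t) w 0%nat.
Proof. intros H. rewrite nth_firstn, nth_skipn. destruct (Nat.ltb_spec t L); [reflexivity|lia]. Qed.

Lemma occurs_iff (s w : list nat) i :
  (i + length s <= length w)%nat ->
  (occurs_at s w i <-> forall t, (t < length s)%nat -> nth (i + t) w 0%nat = nth t s 0%nat).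
Proof.
  intros Hl. unfold occurs_at. split.
  - intros [_ E] t Ht. rewrite <- E. rewrite nth_fs; auto.
  - intros H. split; auto. apply nth_ext with (d := 0%nat) (d' := 0%nat).
    rewrite length_firstn, length_skipn. lia.
    intros t Ht. rewrite length_firstn, length_skipn in Ht. rewrite nth_fs by lia. apply H. lia.
Qed.

Lemma nth_strip (s w : list nat) j : (length s + j < length w - length s)%nat ->
  nth j (strip s w) 0%nat = nth (length s + j) w 0%nat.
Proof.
  intros H. unfold strip. rewrite nth_skipn, nth_firstn.
  destruct (Nat.ltb_spec (length s + j) (length w - length s)); [reflexivity|lia].
Qed.

Lemma length_strip (s w : list nat) : length (strip s w) = (length w - length s - length s)%nat.
Proof. unfold strip. rewrite length_skipn, length_firstn. lia. Qed.

Lemma nth_block L m i t : (t < L)%nat -> nth t (block L m i) 0%nat = nth (i * L + t) m 0%nat.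
Proof. intros H. unfold block. apply nth_fs; auto. Qed.

Lemma length_block L m i : ((i+1) * L <= length m)%nat -> length (block L m i) = L.
Proof. intros H. unfold block. rewrite length_firstn, length_skipn. lia. Qed.

Lemma INR_le_mul (i j : nat) d : (i <= j)%nat -> 0 <= d -> INR i * d <= INR j * d.
Proof. intros H Hd. apply Rmult_le_compat_r; auto. apply le_INR; auto. Qed.

Lemma core_even al dl (N lam : nat) (X Yf : nat -> R) :
  0 < al < 1 -> 0 < dl -> INR (lam + 1) * dl <= al ->
  (forall j, 0 <= X j < 1) ->
  (forall j, exists z, X (S j) = X j + dl - IZR z) ->
  1 - dl <= X 0%nat -> 1 - dl <= X (N - 1)%nat -> (2 <= N)%nat ->
  (forall j, (1 <= j <= N - 2)%nat -> X j < 1 - dl) ->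
  (forall j, 0 <= Yf j < 1 /\ rot al (Yf j) = X (S j)) ->
  (1 - al <= X 0%nat /\ 1 - al <= Yf 0%nat) /\
  (forall i, (i < lam)%nat -> (i < N - 2)%nat /\ 1 - al <= Yf (S i)) /\
  (forall i, (N - 2 - lam <= i < N - 2)%nat -> 1 - al <= X (S i)).
Proof.
  intros Hal Hd Hlam HX Hstep H0 HN1 HN Hmid HY.
  assert (Hdl : dl <= al).
  { pose proof (INR_le_mul 1 (lam+1) dl ltac:(lia) ltac:(lra)). simpl in H. lra. }
  assert (F : forall j, (1 <= j <= N - 1)%nat -> X j = X 0%nat + INR j * dl - 1).
  { induction j; intros Hj; [lia|].
    destruct (Hstep j) as [z E]. destruct (Nat.eq_dec j 0) as [->|Hj0].
    - rewrite (frac_eq _ _ _ 1 (HX 1%nat) E). simpl; ring. simpl. pose proof (HX 0%nat). lra.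
    - rewrite (frac_eq _ _ _ 0 (HX (S j)) E). rewrite IHj by lia. rewrite S_INR. simpl; ring.
      simpl. pose proof (HX j). pose proof (Hmid j ltac:(lia)). lra. }
  assert (HNd : 1 < INR N * dl).
  { rewrite F in HN1 by lia. rewrite minus_INR in HN1 by lia. simpl in HN1. pose proof (HX 0%nat). nra. }
  assert (Yc : forall j, X (S j) < al -> 1 - al <= Yf j).
  { intros j Hj. destruct (HY j) as [B R]. destruct (rot_cases al (Yf j) Hal B) as [E|E]; pose proof (HX (S j)); lra. }
  split; [split|split].
  - lra.
  - apply Yc. rewrite F by lia. simpl. pose proof (HX 0%nat). lra.
  - intros i Hi. assert (A : INR (i + 2) * dl <= al).
    { eapply Rle_trans; [|apply Hlam]. apply INR_le_mul; lia || lra. }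
    assert (i + 2 < N)%nat.
    { apply INR_lt. apply (Rmult_lt_reg_r dl); auto. lra. }
    split; [lia|]. apply Yc. rewrite F by lia. pose proof (HX 0%nat).
    replace (S (S i)) with (i + 2)%nat by lia. lra.
  - intros i Hi. rewrite F by lia. rewrite F in HN1 by lia.
    assert (A : INR (N - 1 - S i + 1) * dl <= al).
    { eapply Rle_trans; [|apply Hlam]. apply INR_le_mul; lia || lra. }
    replace (INR (N - 1 - S i + 1)) with (INR (N-1) - INR (S i) + 1) in A.
    2:{ rewrite plus_INR, (minus_INR (N-1) (S i)) by lia. simpl (INR 1). ring. }
    lra.
Qed.

Lemma core_odd al dl (N lam : nat) (X Yf : nat -> R) :
  0 < al < 1 -> 0 < dl -> INR (lam + 1) * dl <= 1 - al ->
  (forall j, 0 <= X j < 1) ->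
  (forall j, exists z, X (S j) = X j - dl - IZR z) ->
  X 0%nat < dl -> X (N - 1)%nat < dl -> (2 <= N)%nat ->
  (forall j, (1 <= j <= N - 2)%nat -> dl <= X j) ->
  (forall j, 0 <= Yf j < 1 /\ rot al (Yf j) = X (S j)) ->
  (X 0%nat < 1 - al /\ Yf 0%nat < 1 - al) /\
  (forall i, (i < lam)%nat -> (i < N - 2)%nat /\ Yf (S i) < 1 - al) /\
  (forall i, (N - 2 - lam <= i < N - 2)%nat -> X (S i) < 1 - al).
Proof.
  intros Hal Hd Hlam HX Hstep H0 HN1 HN Hmid HY.
  assert (Hdl : dl <= 1 - al).
  { pose proof (INR_le_mul 1 (lam+1) dl ltac:(lia) ltac:(lra)). simpl in H. lra. }
  assert (F : forall j, (1 <= j <= N - 1)%nat -> X j = X 0%nat - INR j * dl + 1).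
  { induction j; intros Hj; [lia|].
    destruct (Hstep j) as [z E]. destruct (Nat.eq_dec j 0) as [->|Hj0].
    - rewrite (frac_eq _ _ _ (-1) (HX 1%nat) E). simpl; ring. simpl. pose proof (HX 0%nat). lra.
    - rewrite (frac_eq _ _ _ 0 (HX (S j)) E). rewrite IHj by lia. rewrite S_INR. simpl; ring.
      simpl. pose proof (HX j). pose proof (Hmid j ltac:(lia)). lra. }
  assert (HNd : 1 < INR N * dl).
  { rewrite F in HN1 by lia. rewrite minus_INR in HN1 by lia. simpl in HN1. pose proof (HX 0%nat). nra. }
  assert (Yc : forall j, al <= X (S j) -> Yf j < 1 - al).
  { intros j Hj. destruct (HY j) as [B R]. destruct (rot_cases al (Yf j) Hal B) as [E|E].
    - pose proof (HX (S j)). lra.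
    - pose proof (HX (S j)). lra. }
  split; [split|split].
  - lra.
  - apply Yc. rewrite F by lia. simpl. pose proof (HX 0%nat). lra.
  - intros i Hi. assert (A : INR (i + 2) * dl <= 1 - al).
    { eapply Rle_trans; [|apply Hlam]. apply INR_le_mul; lia || lra. }
    assert (i + 2 < N)%nat.
    { apply INR_lt. apply (Rmult_lt_reg_r dl); auto. lra. }
    split; [lia|]. apply Yc. rewrite F by lia. pose proof (HX 0%nat).
    replace (S (S i)) with (i + 2)%nat by lia. lra.
  - intros i Hi. rewrite F by lia. rewrite F in HN1 by lia.
    assert (A : INR (N - 1 - S i + 1) * dl <= 1 - al).
    { eapply Rle_trans; [|apply Hlam]. apply INR_le_mul; lia || lra. }
    replace (INR (N - 1 - S i + 1)) with (INR (N-1) - INR (S i) + 1) in A.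
    2:{ rewrite plus_INR, (minus_INR (N-1) (S i)) by lia. simpl (INR 1). ring. }
    lra.
Qed.

Theorem lemma4p5 (alpha : R) (a : nat -> nat) :
  0 < alpha < 1 -> irrational alpha ->
  is_cf_expansion alpha a -> (2 <= a 1%nat)%nat ->
  forall (k : nat) (s w : list nat),
    singular_factor alpha a k s ->
    in_lang alpha w ->
    complete_first_return s w ->
    let L := cf_q a k in
    let m := strip s w in
    let n := Nat.div (length m) L in
    let u := block L m in
    let lam := if Nat.odd k
               then (cf_q a (k + 1) - cf_p a (k + 1) - 1)%nat
               else (cf_p a (k + 1) - 1)%nat in
    (forall i, (i < lam)%nat -> (i < n)%nat /\ last_letter (u i) = last_letter s) /\
    (forall i, (n - lam <= i < n)%nat -> first_letter (u i) = first_letter s) /\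
    first_letter s = last_letter s.
Proof.
  intros Hal Hirr Hcf Ha1 k s w Hsing Hw Hret. cbv zeta.
  assert (Ha := proj1 Hcf).
  destruct (cf_nat a Ha Ha1 k) as [HL1 [HpqL HpS]].
  destruct Hsing as [_ [Hlen Hcyl]].
  destruct k as [|k'].
  { simpl. split; [intros; lia|split; [intros; lia|]].
    unfold first_letter, last_letter. rewrite Hlen. reflexivity. }
  set (K := S k') in *.
  set (L := cf_q a K) in *.
  destruct Hw as [rho0 [Hc0 [i0 Hw]]].
  set (rho := Nat.iter i0 (rot alpha) rho0).
  assert (Hrho : 0 <= rho < 1) by (apply iter_spec; exact Hc0).
  assert (Hwr : forall j, (j < length w)%nat -> sturm alpha rho j = nth j w 0%nat).
  { intros j Hj. unfold rho. rewrite <- sturm_shift. apply Hw; auto. }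
  destruct Hret as [Occ0 [OccE [Hmod [[i1 [j1 [Hij [O1 O2]]]] Hfirst]]]].
  rewrite Hlen in *.
  set (N := (length w / L)%nat).
  assert (HwN : length w = (L * N)%nat).
  { unfold N. rewrite (Nat.div_mod_eq (length w) L) at 1. rewrite Hmod. lia. }
  assert (HN2 : (2 <= N)%nat).
  { destruct O1 as [O1 _]. destruct O2 as [O2 _]. rewrite HwN in *.
    destruct N as [|[|N]]; nia. }
  set (X := fun j => Nat.iter (j * L) (rot alpha) rho).
  set (Yf := fun j => Nat.iter ((j + 1) * L - 1) (rot alpha) rho).
  assert (HX : forall j, 0 <= X j < 1) by (intros j; apply iter_spec; auto).
  assert (Link : forall j, ((j + 1) * L <= length w)%nat ->
            (occurs_at s w (j * L) <-> cylinder alpha s (X j))).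
  { intros j Hj. rewrite occurs_iff by lia. unfold cylinder, in_circle. split.
    - intros H. split; [apply HX|]. intros t Ht. unfold X. rewrite <- sturm_shift.
      rewrite Hwr by nia. apply H. auto.
    - intros [_ H] t Ht. rewrite <- Hwr by nia. rewrite sturm_shift. apply H. auto. }
  assert (Cyl0 : cylinder alpha s (X 0%nat)).
  { apply Link. nia. exact Occ0. }
  assert (CylE : cylinder alpha s (X (N - 1)%nat)).
  { apply Link. nia. replace ((N - 1) * L)%nat with (length w - L)%nat by (rewrite HwN; nia). exact OccE. }
  assert (CylM : forall j, (1 <= j <= N - 2)%nat -> ~ cylinder alpha s (X j)).
  { intros j Hj H. apply Link in H; [|nia].
    destruct (Hfirst _ H) as [E|E].
    - apply Nat.Div0.mod_mul.
    - nia.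
    - rewrite HwN in E. nia. }
  assert (HYf : forall j, 0 <= Yf j < 1 /\ rot alpha (Yf j) = X (S j)).
  { intros j. split. apply iter_spec; auto. unfold Yf, X.
    rewrite <- Nat.iter_succ. f_equal. nia. }
  set (dl := d alpha a K).
  assert (Hd : 0 < dl) by (apply d_pos; auto).
  assert (Hd1 : 0 < d alpha a (S K)) by (apply d_pos; auto).
  assert (HLa : INR L * alpha = P a K + (-1)^K * dl).
  { unfold dl, d. replace ((-1) ^ K * ((-1) ^ K * (Q a K * alpha - P a K))) with
      (((-1) ^ K * (-1) ^ K) * (Q a K * alpha - P a K)) by ring. rewrite sg_sq. unfold Q. fold L. ring. }
  assert (Hstep : forall j, exists z, X (S j) = X j + (-1)^K * dl - IZR z).
  { intros j. destruct (iter_spec alpha L (X j) (HX j)) as [_ [z E]].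
    exists (z - Z.of_nat (cf_p a K))%Z. unfold X at 1.
    replace (S j * L)%nat with (L + j * L)%nat by lia. rewrite Nat.iter_add. fold (X j).
    rewrite E, HLa, minus_IZR, <- INR_IZR_INZ. unfold P. ring. }
  assert (R1 := d_rel1 alpha a K). assert (R2 := d_rel2 alpha a K). fold dl in R1, R2.
  assert (HPK : 1 <= P a K).
  { unfold P, K. apply (le_INR 1). destruct (cf_nat a Ha Ha1 k'); tauto. }
  assert (HPK1 : 1 <= P a (S K)) by (unfold P; apply (le_INR 1); lia).
  destruct (cf_nat a Ha Ha1 (S K)) as [_ [HpqL1 _]].
  assert (HQP : 1 <= Q a K - P a K).
  { unfold P, Q. rewrite <- minus_INR by lia. apply (le_INR 1). lia. }
  assert (HQP1 : 1 <= Q a (S K) - P a (S K)).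
  { unfold P, Q. rewrite <- minus_INR by lia. apply (le_INR 1). lia. }
  assert (En : (length (strip s w) / L = N - 2)%nat).
  { rewrite length_strip, Hlen, HwN. replace (L * N - L - L)%nat with ((N - 2) * L)%nat by nia.
    apply Nat.div_mul. lia. }
  rewrite En.
  assert (FS : first_letter s = sturm alpha rho 0).
  { unfold first_letter. destruct Cyl0 as [_ C]. rewrite <- (C 0%nat) by lia. reflexivity. }
  assert (LS : last_letter s = sturm alpha rho ((0 + 1) * L - 1)).
  { unfold last_letter. destruct Cyl0 as [_ C]. rewrite Hlen.
    replace ((0 + 1) * L - 1)%nat with (L - 1)%nat by lia.
    rewrite <- (C (L - 1)%nat) by lia. reflexivity. }
  assert (FU : forall i, (i < N - 2)%nat -> first_letter (block L (strip s w) i) = sturm alpha rho (S i * L)).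
  { intros i Hi. unfold first_letter. rewrite nth_block by lia. rewrite nth_strip by (rewrite Hlen, HwN; nia).
    rewrite Hlen, Hwr by nia. f_equal. lia. }
  assert (LU : forall i, (i < N - 2)%nat -> last_letter (block L (strip s w) i) = sturm alpha rho ((S i + 1) * L - 1)).
  { intros i Hi. unfold last_letter. rewrite length_block.
    2:{ rewrite length_strip, Hlen, HwN. nia. }
    rewrite nth_block by lia. rewrite nth_strip by (rewrite Hlen, HwN; nia).
    rewrite Hlen, Hwr by nia. f_equal. nia. }
  replace (K + 1)%nat with (S K) by lia.
  rewrite FS, LS.
  rewrite sg_odd in Hstep, HLa.
  destruct (Nat.odd K) eqn:Hodd.
  -
    assert (Hdl : (Q a (S K) - P a (S K)) * dl < 1 - alpha).
    { assert ((Q a K - P a K) * d alpha a (S K) > 0) by (apply Rmult_lt_0_compat; lra). lra. }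
    assert (Hdl2 : dl < 1 - alpha).
    { assert ((Q a (S K) - P a (S K) - 1) * dl >= 0) by (apply Rle_ge, Rmult_le_pos; lra). lra. }
    assert (Hx : frac_part (- (INR L * alpha)) = dl).
    { rewrite HLa. rewrite (fp_val _ (- Z.of_nat (cf_p a K))). rewrite opp_IZR, <- INR_IZR_INZ. unfold P. ring.
      rewrite opp_IZR, <- INR_IZR_INZ. unfold P in *. lra. }
    rewrite Hx in Hcyl.
    assert (Cs : forall r, cylinder alpha s r <-> 0 <= r < dl).
    { destruct Hcyl as [H|H]; auto. exfalso.
      assert (h1 : dl <= dl < 1) by lra. assert (h2 : dl <= 1 - alpha < 1) by lra.
      destruct (proj2 (H dl) h1) as [_ C1]. destruct (proj2 (H (1 - alpha)) h2) as [_ C2].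
      assert (h0 : (0 < length s)%nat) by lia. specialize (C1 0%nat h0). specialize (C2 0%nat h0).
      rewrite letter0 in C1 by (simpl; lra). rewrite letter1 in C2 by (simpl; lra). congruence. }
    set (lam := (cf_q a (S K) - cf_p a (S K) - 1)%nat).
    assert (Hlam : INR (lam + 1) * dl <= 1 - alpha).
    { unfold lam. replace (cf_q a (S K) - cf_p a (S K) - 1 + 1)%nat with (cf_q a (S K) - cf_p a (S K))%nat by lia.
      rewrite minus_INR by lia. fold (P a (S K)) (Q a (S K)). lra. }
    assert (Hst : forall j, exists z, X (S j) = X j - dl - IZR z).
    { intros j. destruct (Hstep j) as [z E]. exists z. rewrite E. ring. }
    destruct (core_odd alpha dl N lam X Yf Hal Hd Hlam HX Hst) as [[A1 A2] [B C]].
    + apply Cs; auto.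
    + apply Cs; auto.
    + auto.
    + intros j Hj. destruct (Rlt_le_dec (X j) dl) as [h|h]; auto. exfalso. apply (CylM j Hj). apply Cs. split; [apply HX|auto].
    + auto.
    + rewrite (letter0 _ _ 0) by (change (0 <= X 0%nat < 1 - alpha); pose proof (HX 0%nat); lra).
      rewrite (letter0 _ _ ((0 + 1) * L - 1)) by (change (0 <= Yf 0%nat < 1 - alpha); pose proof (HYf 0%nat); lra).
      split; [|split; auto].
      * intros i Hi. destruct (B i Hi) as [Hi2 HB]. split; auto. rewrite LU by auto.
        apply letter0. change (0 <= Yf (S i) < 1 - alpha). pose proof (HYf (S i)). lra.
      * intros i Hi. rewrite FU by lia. apply letter0. change (0 <= X (S i) < 1 - alpha). pose proof (HX (S i)). specialize (C i Hi). lra.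
  -
    assert (Hdl : P a (S K) * dl < alpha).
    { assert (P a K * d alpha a (S K) > 0) by (apply Rmult_lt_0_compat; lra). lra. }
    assert (Hdl2 : dl < alpha).
    { assert ((P a (S K) - 1) * dl >= 0) by (apply Rle_ge, Rmult_le_pos; lra). lra. }
    assert (Hx : frac_part (- (INR L * alpha)) = 1 - dl).
    { rewrite HLa. rewrite (fp_val _ (- Z.of_nat (cf_p a K) - 1)). rewrite minus_IZR, opp_IZR, <- INR_IZR_INZ. unfold P. ring.
      rewrite minus_IZR, opp_IZR, <- INR_IZR_INZ. unfold P in *. lra. }
    rewrite Hx in Hcyl.
    assert (Cs : forall r, cylinder alpha s r <-> 1 - dl <= r < 1).
    { destruct Hcyl as [H|H]; auto. exfalso.
      assert (h1 : 0 <= 0 < 1 - dl) by lra. assert (h2 : 0 <= 1 - alpha < 1 - dl) by lra.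
      destruct (proj2 (H 0) h1) as [_ C1]. destruct (proj2 (H (1 - alpha)) h2) as [_ C2].
      assert (h0 : (0 < length s)%nat) by lia. specialize (C1 0%nat h0). specialize (C2 0%nat h0).
      rewrite letter0 in C1 by (simpl; lra). rewrite letter1 in C2 by (simpl; lra). congruence. }
    set (lam := (cf_p a (S K) - 1)%nat).
    assert (Hlam : INR (lam + 1) * dl <= alpha).
    { unfold lam. replace (cf_p a (S K) - 1 + 1)%nat with (cf_p a (S K)) by lia.
      fold (P a (S K)). lra. }
    assert (Hst : forall j, exists z, X (S j) = X j + dl - IZR z).
    { intros j. destruct (Hstep j) as [z E]. exists z. rewrite E. ring. }
    destruct (core_even alpha dl N lam X Yf Hal Hd Hlam HX Hst) as [[A1 A2] [B C]].
    + apply Cs; auto.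
    + apply Cs; auto.
    + auto.
    + intros j Hj. destruct (Rlt_le_dec (X j) (1 - dl)) as [h|h]; auto. exfalso. apply (CylM j Hj). apply Cs. split; [auto|apply HX].
    + auto.
    + rewrite (letter1 _ _ 0) by (change (1 - alpha <= X 0%nat); lra).
      rewrite (letter1 _ _ ((0 + 1) * L - 1)) by (change (1 - alpha <= Yf 0%nat); lra).
      split; [|split; auto].
      * intros i Hi. destruct (B i Hi) as [Hi2 HB]. split; auto. rewrite LU by auto.
        apply letter1. change (1 - alpha <= Yf (S i)). lra.
      * intros i Hi. rewrite FU by lia. apply letter1. change (1 - alpha <= X (S i)). specialize (C i Hi). lra.
Qed.
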